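(* Let $P$ and $Q$ be real polynomials. Then $P^2\preceq P$ holds if and only if $0\preceq P\preceq1$. Furthermore, if $P^2\preceq P$ and $0\preceq Q\preceq P$, then $Q^2\preceq Q$.
   Context: For real polynomials $P,Q$ (in finitely many variables), $P\preceq Q$ means $Q=P+\sum_{i=1}^m R_i^2$ for some polynomials $R_1,\dots,R_m$; $0\preceq P$ means $P$ is a sum of squares and $P\preceq1$ means $1-P$ is a sum of squares. *)

(* Defs.v *)
From HB Require Import structures.
From mathcomp Require Import all_boot all_order all_algebra.
From mathcomp Require Import reals.
From mathcomp Require Import mpoly.
Set Implicit Arguments. Unset Strict Implicit. Unset Printing Implicit Defensive.
Import Order.TTheory GRing.Theory Num.Theory.
Local Open Scope ring_scope.

Definition sos_le (R : realType) (n : nat) (P Q : {mpoly R[n]}) : Prop :=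
  exists s : seq {mpoly R[n]}, Q = P + \sum_(r <- s) r ^+ 2.

(* Main.v *)
Require Import Defs.
From HB Require Import structures.
From mathcomp Require Import all_boot all_order all_algebra.
From mathcomp Require Import reals.
From mathcomp Require Import mpoly.
Local Open Scope ring_scope.
Import GRing.Theory.
Set Implicit Arguments.

Section S.
Variables (R : realType) (n : nat).
Local Notation T := {mpoly R[n]}.
Definition issos (X : T) := exists s : seq T, X = \sum_(r <- s) r ^+ 2.

Lemma sos_leE (A B : T) : sos_le A B <-> issos (B - A).
Proof.
split=> -[s Hs]; exists s.
  by rewrite Hs addrC addKr.
by rewrite -Hs addrC subrK.
Qed.

Lemma issosD X Y : issos X -> issos Y -> issos (X + Y).
Proof. by move=> [s ->] [t ->]; exists (s ++ t); rewrite big_cat. Qed.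

Lemma issosX X : issos (X ^+ 2).
Proof. by exists [:: X]; rewrite big_cons big_nil addr0. Qed.

Lemma issosM X Y : issos X -> issos Y -> issos (X * Y).
Proof.
move=> [s ->] [t ->]; elim: s => [|a s [u Hu]].
  by exists [::]; rewrite !big_nil mul0r.
exists ([seq a * b | b <- t] ++ u).
rewrite big_cons mulrDl Hu big_cat /= big_map; congr (_ + _).
rewrite big_distrr /=; apply: eq_bigr => b _.
by rewrite exprMn.
Qed.
End S.

Theorem lemmaA1 (R : realType) (n : nat) (P Q : {mpoly R[n]}) :
  (sos_le (P ^+ 2) P <-> (sos_le 0 P /\ sos_le P 1)) /\
  (sos_le (P ^+ 2) P -> sos_le 0 Q -> sos_le Q P -> sos_le (Q ^+ 2) Q).
Proof.
have part1 : sos_le (P ^+ 2) P <-> (sos_le 0 P /\ sos_le P 1).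
  rewrite !sos_leE subr0; split.
    move=> H; split.
      have -> : P = P ^+ 2 + (P - P ^+ 2) by rewrite addrC subrK.
      exact: issosD (issosX _) H.
    have -> : 1 - P = (1 - P) ^+ 2 + (P - P ^+ 2)
      by rewrite expr2 mulrBl mul1r mulrBr mulr1 subrK.
    exact: issosD (issosX _) H.
  move=> [H1 H2].
  have -> : P - P ^+ 2 = P * (1 - P) by rewrite mulrBr mulr1 expr2.
  exact: issosM.
split=> //.
move=> HP; have [_ H1] := part1.1 HP.
rewrite !sos_leE subr0 => HQ HPQ.
rewrite sos_leE in H1.
have -> : Q - Q ^+ 2 = Q * ((1 - P) + (P - Q)) by rewrite addrA subrK mulrBr mulr1 expr2.
exact: issosM HQ (issosD H1 HPQ).
Qed.
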